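(* Let $\Gamma\subset(\mathbb{RP}^1)^m$ be a real EPBQ-curve, and let $a_{jl},b_{jl},e_{jl}$ be the coefficients of its defining relations. Suppose that there exist indices $j\ne l$ such that the four numbers $a_{jl}$, $-b_{jl}$, $-b_{lj}$, $e_{jl}$ are either all positive or all negative, and either $a_{jl}e_{jl}\ge 1$ or $b_{jl}b_{lj}\ge 1$. Then $\Gamma$ is not realisable.
   Context: A real EPBQ-curve is an irreducible real algebraic curve $\Gamma\subset(\mathbb{RP}^1)^m$ (coordinates $z_1,\dots,z_m$) such that (i) for each $j\ne l$, $a_{jl}z_j^2z_l^2+b_{jl}z_j^2-2z_jz_l+b_{lj}z_l^2+e_{jl}=0$ on $\Gamma$ with real coefficients; (ii) no $z_j$ is identically $0$ or $\infty$ on $\Gamma$; (iii) for $j\ne l$, $z_j,z_l$ are neither directly nor inversely proportional on $\Gamma$. The coefficients are uniquely determined, with $a_{jl}=a_{lj}$, $e_{jl}=e_{lj}$. $\Gamma$ is realisable if there exist $n\ge3$, a decomposition $[n]=I_1\sqcup\dots\sqcup I_m$ into nonempty sets ($p\in I_{j(p)}$), nonzero reals $\lambda_1,\dots,\lambda_n$ with $\lambda_p\ne\pm\lambda_q$ whenever $p\ne q$, $j(p)=j(q)$, and reals $g_{pq}=g_{qp}$ for $p\ne q$, $j(p)=j(q)$, such that the matrices $G=(g_{pq})$, $H=(h_{pq})$ defined by $g_{pp}=h_{pp}=1$; $h_{pq}=\frac{2\lambda_p(\lambda_pg_{pq}-\lambda_q)}{\lambda_p^2-\lambda_q^2}$ if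 $p\ne q$, $j(p)=j(q)$; and, if $j(p)\ne j(q)$, $g_{pq}=\frac12\left(-\frac{a_{j(p)j(q)}}{\lambda_p\lambda_q}+\frac{\lambda_qb_{j(p)j(q)}}{\lambda_p}+\frac{\lambda_pb_{j(q)j(p)}}{\lambda_q}-\lambda_p\lambda_qe_{j(p)j(q)}\right)$, $h_{pq}=\frac{\lambda_pb_{j(q)j(p)}}{\lambda_q}-\lambda_p\lambda_qe_{j(p)j(q)}$, satisfy one of: (S) $G$ positive definite; (E) $G$ degenerate positive semidefinite with all principal minors of sizes $2,\dots,n-1$ strictly positive and no row of $H$ a linear combination of rows of $G$; (L) $G$ non-degenerate with negative index of inertia $1$, all principal minors of sizes $2,\dots,n-1$ strictly positive, and $\sum_{q,r}g^{qr}h_{pq}h_{pr}<0$ for all $p$, where $(g^{qr})=G^{-1}$. *)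

(* Defs.v *)
From HB Require Import structures.
From mathcomp Require Import all_boot all_order all_algebra.
Set Warnings "-notation-overridden,-ambiguous-paths".
From mathcomp Require Import reals.
Set Implicit Arguments. Unset Strict Implicit. Unset Printing Implicit Defensive.
Import Order.TTheory GRing.Theory Num.Theory.
Local Open Scope ring_scope.

Section EPBQ.
Variable R : realType.

Definition qform n (G : 'M[R]_n) (v : 'rV[R]_n) : R := (v *m G *m v^T) 0 0.

Definition posdef n (G : 'M[R]_n) : Prop :=
  forall v : 'rV[R]_n, v != 0 -> 0 < qform G v.

Definition possemidef n (G : 'M[R]_n) : Prop :=
  forall v : 'rV[R]_n, 0 <= qform G v.

Definition principal_submx n (G : 'M[R]_n) (S : {set 'I_n}) : 'M[R]_#|S| :=
  \matrix_(i < #|S|, j < #|S|) G (enum_val i) (enum_val j).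

Definition minors_pos n (G : 'M[R]_n) : Prop :=
  forall S : {set 'I_n}, (2 <= #|S|)%N -> (#|S| <= n.-1)%N ->
    0 < \det (principal_submx G S).

Definition negdef_on n k (G : 'M[R]_n) (V : 'M[R]_(k, n)) : Prop :=
  forall u : 'rV[R]_k, u != 0 -> qform G (u *m V) < 0.

Definition neg_index_is n (G : 'M[R]_n) (k : nat) : Prop :=
  (exists V : 'M[R]_(k, n), row_free V /\ negdef_on G V) /\
  (forall V : 'M[R]_(k.+1, n), row_free V -> ~ negdef_on G V).

Variables (m : nat) (a b e : 'I_m -> 'I_m -> R).

(* The matrices G and H built from the data
   n, decomposition jf : [n] -> [m] (p \in I_{jf p}), lam, g. *)
Definition Gmx n (jf : 'I_n -> 'I_m) (lam : 'I_n -> R)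
  (g : 'I_n -> 'I_n -> R) : 'M[R]_n :=
  \matrix_(p, q)
    if p == q then 1
    else if jf p == jf q then g p q
    else (- a (jf p) (jf q) / (lam p * lam q)
          + lam q * b (jf p) (jf q) / lam p
          + lam p * b (jf q) (jf p) / lam q
          - lam p * lam q * e (jf p) (jf q)) / 2.

Definition Hmx n (jf : 'I_n -> 'I_m) (lam : 'I_n -> R)
  (g : 'I_n -> 'I_n -> R) : 'M[R]_n :=
  \matrix_(p, q)
    if p == q then 1
    else if jf p == jf q then
      2 * lam p * (lam p * g p q - lam q) / (lam p ^+ 2 - lam q ^+ 2)
    else lam p * b (jf q) (jf p) / lam q - lam p * lam q * e (jf p) (jf q).

Definition caseS n (G : 'M[R]_n) : Prop := posdef G.

Definition caseE n (G H : 'M[R]_n) : Prop :=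
  [/\ \det G = 0, possemidef G, minors_pos G &
      forall p : 'I_n, ~~ (row p H <= G)%MS].

Definition caseL n (G H : 'M[R]_n) : Prop :=
  [/\ \det G != 0, neg_index_is G 1, minors_pos G &
      forall p : 'I_n,
        \sum_(q < n) \sum_(r < n) invmx G q r * H p q * H p r < 0].

Definition realisable : Prop :=
  exists (n : nat) (jf : 'I_n -> 'I_m) (lam : 'I_n -> R)
         (g : 'I_n -> 'I_n -> R),
    (3 <= n)%N /\ [/\
        (forall j : 'I_m, exists p : 'I_n, jf p = j),
        (forall p, lam p != 0),
        (forall p q, p != q -> jf p = jf q ->
             lam p != lam q /\ lam p != - lam q),
        (forall p q, p != q -> jf p = jf q -> g p q = g q p) &
        (let G := Gmx jf lam g in let H := Hmx jf lam g in
         caseS G \/ caseE G H \/ caseL G H)].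

End EPBQ.

(* Main.v *)
Require Import Defs.
From HB Require Import structures.
Set Warnings "-notation-overridden,-ambiguous-paths".
From mathcomp Require Import all_boot all_order all_algebra.
From mathcomp Require Import reals.
From mathcomp Require Import ring lra.
Import Order.TTheory GRing.Theory Num.Theory.
Local Open Scope ring_scope.
Lemma det22 (R : comNzRingType) (A : 'M[R]_2) : \det A = A 0 0 * A 1 1 - A 0 1 * A 1 0.
Proof.
rewrite (expand_det_row _ 0) !big_ord_recl big_ord0 /cofactor !det_mx11 !mxE /=.
have -> : lift (0:'I_2) (0:'I_1) = 1 by apply/val_inj.
have -> : lift (1:'I_2) (0:'I_1) = 0 by apply/val_inj.
have -> : (ord0 : 'I_2) = 0 by apply/val_inj.
rewrite /bump /= expr0 expr1.
ring.
Qed.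

Lemma det_pair_gen (R : realType) n (G : 'M[R]_n) p q k (f : 'I_k -> 'I_n) :
  k = 2%N -> (forall i, f i \in [set p; q]) -> injective f ->
  \det (\matrix_(i < k, j < k) G (f i) (f j)) = G p p * G q q - G p q * G q p.
Proof.
move=> hk; subst k => memS inj.
rewrite det22 !mxE.
have f01 : f 0 != f 1 by apply/eqP => /inj.
move: (memS 0) (memS 1) f01; rewrite !in_set2.
case/orP => /eqP -> ; case/orP => /eqP -> ; rewrite ?eqxx //= => _; ring.
Qed.

Lemma det_pair (R : realType) n (G : 'M[R]_n) p q : p != q ->
  \det (principal_submx G [set p; q]) = G p p * G q q - G p q * G q p.
Proof.
move=> pq; rewrite /principal_submx.
apply: det_pair_gen; [by rewrite cards2 pq | exact: enum_valP | exact: enum_val_inj].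
Qed.

Lemma qform_delta (R : realType) n (G : 'M[R]_n) p q :
  ((delta_mx 0 p : 'rV[R]_n) *m G *m (delta_mx 0 q : 'rV[R]_n)^T) 0 0 = G p q.
Proof. by rewrite trmx_delta -rowE -colE !mxE. Qed.

Lemma qform_delta' (R : realType) n (G : 'M[R]_n) p q :
  ((delta_mx 0 p : 'rV[R]_n) *m G *m (delta_mx 0 q : 'rV[R]_n)^T) = const_mx (G p q).
Proof. by apply/matrixP => i j; rewrite (ord1 i) (ord1 j) qform_delta mxE. Qed.

Lemma qform_pair (R : realType) n (G : 'M[R]_n) p q c :
  qform G (delta_mx 0 p + c *: delta_mx 0 q) = G p p + c * G p q + c * G q p + c * c * G q q.
Proof.
rewrite /qform linearD /= linearZ /= !mulmxDl !mulmxDr -!scalemxAl -!scalemxAr !qform_delta' !mxE.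
ring.
Qed.

Lemma core (R : realType) (A B C E x y : R) :
  0 < A -> 0 < B -> 0 < C -> 0 < E -> 0 < x ^+ 2 -> 0 < y ^+ 2 ->
  1 <= A * E \/ 1 <= B * C ->
  4 * (x ^+ 2 * y ^+ 2) < (A + B * y ^+ 2 + C * x ^+ 2 + E * (x ^+ 2 * y ^+ 2)) ^+ 2.
Proof.
move=> hA hB hC hE hx hy.
set X := x ^+ 2; set Y := y ^+ 2.
have hXY : 0 < X * Y by rewrite mulr_gt0.
case=> h.
- have h1 : 4 * (X * Y) <= (A + E * (X * Y)) ^+ 2.
    have : 0 <= (A - E * (X * Y)) ^+ 2 by rewrite sqr_ge0.
    have : 0 <= (A * E - 1) * (X * Y) by apply: mulr_ge0; [rewrite subr_ge0 | apply: ltW].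
    move=> h2 h3; nra.
  have h4 : 0 < B * Y + C * X by rewrite addr_gt0 // mulr_gt0.
  have h5 : 0 < A + E * (X * Y) by rewrite addr_gt0 // mulr_gt0.
  nra.
- have h1 : 4 * (X * Y) <= (B * Y + C * X) ^+ 2.
    have : 0 <= (B * Y - C * X) ^+ 2 by rewrite sqr_ge0.
    have : 0 <= (B * C - 1) * (X * Y) by apply: mulr_ge0; [rewrite subr_ge0 | apply: ltW].
    move=> h2 h3; nra.
  have h4 : 0 < B * Y + C * X by rewrite addr_gt0 // mulr_gt0.
  have h5 : 0 < A + E * (X * Y) by rewrite addr_gt0 // mulr_gt0.
  nra.
Qed.

Theorem mainTheorem7 (R : realType) (m : nat) (a b e : 'I_m -> 'I_m -> R)
  (a_sym : forall j l : 'I_m, j != l -> a j l = a l j)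
  (e_sym : forall j l : 'I_m, j != l -> e j l = e l j)
  (j l : 'I_m) (hjl : j != l)
  (hsign : (0 < a j l /\ 0 < - b j l /\ 0 < - b l j /\ 0 < e j l) \/
           (a j l < 0 /\ - b j l < 0 /\ - b l j < 0 /\ e j l < 0))
  (hprod : 1 <= a j l * e j l \/ 1 <= b j l * b l j) :
  ~ realisable a b e.
Proof.
case=> n [jf [lam [g [n3 [hcov hlam hdist hsym hcase]]]]].
have [p hp] := hcov j; have [q hq] := hcov l.
have pq : p != q by apply: contraNneq hjl => epq; rewrite -hp -hq epq.
set G := Gmx a b e jf lam g in hcase.
have hx := hlam p; have hy := hlam q.
set x := lam p in hx; set y := lam q in hy.
have Gpp : G p p = 1 by rewrite /G /Gmx mxE eqxx.
have Gqq : G q q = 1 by rewrite /G /Gmx mxE eqxx.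
have Gpq : G p q = (- a j l / (x * y) + y * b j l / x + x * b l j / y - x * y * e j l) / 2.
  by rewrite /G /Gmx mxE (negbTE pq) hp hq (negbTE hjl).
have Gqp : G q p = G p q.
  rewrite Gpq /G /Gmx mxE eq_sym (negbTE pq) hp hq eq_sym (negbTE hjl).
  rewrite -a_sym // -e_sym // -/x -/y [y * x]mulrC; ring.
clearbody x y.
have hx2 : 0 < x ^+ 2 by rewrite exprn_even_gt0.
have hy2 : 0 < y ^+ 2 by rewrite exprn_even_gt0.
have hxy : 0 < x ^+ 2 * y ^+ 2 by rewrite mulr_gt0.
have hg : 1 < G p q ^+ 2.
  case: hsign => [[h1 [h2 [h3 h4]]] | [h1 [h2 [h3 h4]]]].
  - have hN := @core R (a j l) (- b j l) (- b l j) (e j l) x y h1 h2 h3 h4 hx2 hy2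
      ltac:(by rewrite ?mulrNN; exact: hprod).
    have key : G p q * (2 * (x * y)) = - (a j l + - b j l * y ^+ 2 + - b l j * x ^+ 2 + e j l * (x ^+ 2 * y ^+ 2)).
      by rewrite Gpq; field; rewrite hx hy.
    have key2 : G p q ^+ 2 * (4 * (x ^+ 2 * y ^+ 2)) = (a j l + - b j l * y ^+ 2 + - b l j * x ^+ 2 + e j l * (x ^+ 2 * y ^+ 2)) ^+ 2.
      by rewrite -[RHS]sqrrN -key; ring.
    nra.
  - have hN := @core R (- a j l) (b j l) (b l j) (- e j l) x y
      ltac:(lra) ltac:(lra) ltac:(lra) ltac:(lra) hx2 hy2 ltac:(by rewrite ?mulrNN; exact: hprod).
    have key : G p q * (2 * (x * y)) = (- a j l + b j l * y ^+ 2 + b l j * x ^+ 2 + - e j l * (x ^+ 2 * y ^+ 2)).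
      by rewrite Gpq; field; rewrite hx hy.
    have key2 : G p q ^+ 2 * (4 * (x ^+ 2 * y ^+ 2)) = (- a j l + b j l * y ^+ 2 + b l j * x ^+ 2 + - e j l * (x ^+ 2 * y ^+ 2)) ^+ 2.
      by rewrite -key; ring.
    nra.
have minor_contra : minors_pos G -> False.
  move=> hm.
  have hS2 : #|[set p; q]| = 2%N by rewrite cards2 pq.
  have hn : (2 <= n.-1)%N by case: (n) n3 => [|[|[|k]]].
  have := hm [set p; q] ltac:(by rewrite hS2) ltac:(by rewrite hS2).
  rewrite det_pair // Gpp Gqq Gqp => h.
  nra.
case: hcase => [hS | [[_ _ hm _] | [_ _ hm _]]]; last 2 first.
- exact: minor_contra.
- exact: minor_contra.
have ne c : delta_mx 0 p + c *: delta_mx 0 q != 0 :> 'rV[R]_n.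
  apply/eqP => /(congr1 (fun M : 'rV[R]_n => M 0 p)); rewrite !mxE eqxx (negbTE pq) /=.
  rewrite eqxx mulr0 addr0 => /eqP; apply/negP; exact: oner_neq0.
have h1 := hS _ (ne 1); have h2 := hS _ (ne (-1)).
rewrite qform_pair Gpp Gqq Gqp in h1; rewrite qform_pair Gpp Gqq Gqp in h2.
nra.
Qed.
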